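(* Let $H$ be a real or complex Hilbert space of dimension $n$, let $N\ge \max(n,2)$, let $F=\{f_i\}_{i=1}^N$ be a frame for $H$, and let $\{q_i\}_{i=1}^N$ be a weight number sequence. Let $G=\{g_i\}_{i=1}^N$ be a dual of $F$ satisfying: (i) $\langle g_i,f_i\rangle\ge 0$ for all $1\le i\le N$; (ii) there is a constant $c>0$ with $q_iq_j\langle g_j,f_i\rangle\langle g_i,f_j\rangle=c$ for all $i\ne j$. Let $\zeta=\{i: q_i\langle g_i,f_i\rangle=\mathcal{R}_1^p(F,G)\}$. If $|\zeta|=1$, then $$\mathcal{R}_2^p(F,G)=\frac12\Big\{\mathcal{R}_1^p(F,G)+\max_{i\notin\zeta}q_i\langle g_i,f_i\rangle+\sqrt{\big(\mathcal{R}_1^p(F,G)-\max_{i\notin\zeta}q_i\langle g_i,f_i\rangle\big)^2+4c}\Big\}.$$ If $|\zeta|>1$, then $\mathcal{R}_2^p(F,G)=\mathcal{R}_1^p(F,G)+\sqrt{c}$.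
   Context: Inner products are linear in the first argument. A frame for $H$ is a finite sequence spanning $H$. Analysis operator: $\Theta_F f=(\langle f,f_i\rangle)_i$. Synthesis operator: $\Theta_G^*(c)=\sum_i c_ig_i$. A dual of $F$ is a frame $G$ with $f=\sum_i\langle f,f_i\rangle g_i=\sum_i\langle f,g_i\rangle f_i$ for all $f$. A probability sequence satisfies $0\le p_i\le 1$ and $\sum p_i=1$. Weight numbers: $q_i=\frac{\sum_j p_j}{\sum_j p_j-p_i}\cdot\frac{N-1}{n}$ (assumed well defined). For $m\in\{1,2\}$, $\mathcal{D}_m^p$ is the set of $N\times N$ diagonal matrices $D$ for which there is $\Lambda\subseteq\{1,\dots,N\}$ with $|\Lambda|=m$, $D_{ii}=q_i$ for $i\in\Lambda$ and $D_{ii}=0$ otherwise. $\mathcal{R}_m^p(F,G)=\max\{\rho(\Theta_G^*D\Theta_F):D\in\mathcal{D}_m^p\}$, with $\rho$ the spectral radius. *)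

(* Defs.v *)
From HB Require Import structures.
From mathcomp Require Import all_boot all_order all_algebra.
Set Implicit Arguments. Unset Strict Implicit. Unset Printing Implicit Defensive.
Import Order.TTheory GRing.Theory Num.Theory.
Local Open Scope ring_scope.

(* H is modelled as C^n (column vectors 'cV[C]_n) over an
   arbitrary numeric algebraically closed field C (e.g. algC), with the
   standard inner product, linear in the first argument. *)

Section FrameDefs.
Variable C : numClosedFieldType.

Definition inner n (x y : 'cV[C]_n) : C := \sum_k x k 0 * (y k 0)^*.

Definition is_frame n N (f : 'I_N -> 'cV[C]_n) : Prop :=
  forall x : 'cV[C]_n, exists a : 'I_N -> C, x = \sum_i a i *: f i.

Definition is_dual n N (f g : 'I_N -> 'cV[C]_n) : Prop :=
  is_frame g /\
  forall x : 'cV[C]_n,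
    x = \sum_i inner x (f i) *: g i /\ x = \sum_i inner x (g i) *: f i.

Definition is_prob_seq N (p : 'I_N -> C) : Prop :=
  (forall i, 0 <= p i <= 1) /\ \sum_i p i = 1.

Definition weight n N (p : 'I_N -> C) (i : 'I_N) : C :=
  (\sum_j p j) / (\sum_j p j - p i) * ((N.-1)%:R / n%:R).

(* analysis operator Theta_F : H -> C^N, (Theta_F x)_i = <x, f_i> *)
Definition analysis n N (f : 'I_N -> 'cV[C]_n) : 'M[C]_(N, n) :=
  \matrix_(i, k) (f i k 0)^*.

(* synthesis operator Theta_G^* : C^N -> H, c |-> sum_i c_i g_i *)
Definition synthesis n N (g : 'I_N -> 'cV[C]_n) : 'M[C]_(n, N) :=
  \matrix_(k, i) g i k 0.

Definition eigen_seq n (A : 'M[C]_n) : seq C :=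
  sval (closed_field_poly_normal (char_poly A)).

Definition spec_rad n (A : 'M[C]_n) : C :=
  \big[Num.max/0]_(z <- eigen_seq A) `|z|.

Definition diagD N (q : 'I_N -> C) (L : {set 'I_N}) : 'M[C]_N :=
  diag_mx (\row_i (if i \in L then q i else 0)).

Definition Rmp n N (p : 'I_N -> C) (m : nat) (f g : 'I_N -> 'cV[C]_n) : C :=
  \big[Num.max/0]_(L : {set 'I_N} | #|L| == m)
     spec_rad (synthesis g *m diagD (weight n p) L *m analysis f).

End FrameDefs.

(* Main.v *)
Require Import Defs.
From HB Require Import structures.
From mathcomp Require Import all_boot all_order all_algebra.
From mathcomp Require Import ring.
Import Order.TTheory GRing.Theory Num.Theory.
Local Open Scope ring_scope.

Lemma max_cases {C : numDomainType} (x y : C) : Num.max x y = x \/ Num.max x y = y.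
Proof. rewrite /Order.max; case: ifP; auto. Qed.

Lemma bm_ge0 (C : numDomainType) (I : Type) (r : seq I) (P : pred I) (F : I -> C) :
  (forall i, P i -> 0 <= F i) -> 0 <= \big[Num.max/0]_(i <- r | P i) F i.
Proof.
move=> H; apply: (big_ind (fun x => 0 <= x)) => // x y hx hy.
by case: (max_cases x y) => ->.
Qed.

Lemma bm_le (C : numDomainType) (I : eqType) (r : seq I) (P : pred I) (F : I -> C) B :
  0 <= B -> (forall i, i \in r -> P i -> F i <= B) -> \big[Num.max/0]_(i <- r | P i) F i <= B.
Proof.
move=> H0 H; rewrite big_seq_cond; apply: (big_ind (fun x => x <= B)) => //.
  by move=> x y hx hy; case: (max_cases x y) => ->.
by move=> i /andP [? ?]; apply: H.
Qed.

Lemma bm_ge (C : numDomainType) (I : eqType) (r : seq I) (P : pred I) (F : I -> C) i :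
  (forall i, P i -> 0 <= F i) -> i \in r -> P i -> F i <= \big[Num.max/0]_(i <- r | P i) F i.
Proof.
move=> H; elim: r => [//|a r IH]; rewrite inE big_cons => /orP [/eqP <-|ir] Pi.
  rewrite Pi /Order.max; case: ifP => [/ltW //|_]; exact: lexx.
have h2 := IH ir Pi.
case: ifP => // Pa.
have r0 := @bm_ge0 C I r P F H.
rewrite /Order.max; case: ifP => // hlt.
apply: le_trans h2 _.
rewrite real_leNgt ?hlt //; apply: ger0_real; auto.
Qed.

Lemma bm_attained (C : numDomainType) (I : eqType) (r : seq I) (P : pred I) (F : I -> C) :
  (forall i, P i -> 0 <= F i) -> (exists2 i, i \in r & P i) ->
  exists i, [/\ i \in r, P i & \big[Num.max/0]_(i <- r | P i) F i = F i].
Proof.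
move=> H [i0 ir0 Pi0].
have : forall s : seq I, \big[Num.max/0]_(i <- s | P i) F i = 0 \/
       exists i, [/\ i \in s, P i & \big[Num.max/0]_(i <- s | P i) F i = F i].
  elim=> [|a s IH]; first by left; rewrite big_nil.
  rewrite big_cons.
  case: ifP => Pa.
    case: (max_cases (F a) (\big[Num.max/0]_(j <- s | P j) F j)) => ->.
      by right; exists a; rewrite inE eqxx.
    case: IH => [->|[i [ir Pi ->]]]; first by left.
    by right; exists i; rewrite inE ir orbT.
  case: IH => [->|[i [ir Pi ->]]]; first by left.
  by right; exists i; rewrite inE ir orbT.
move=> /(_ r).
case=> [e|//]; exists i0; split => //.
apply/eqP; rewrite e eq_le H //=.
by have := @bm_ge C I r P F i0 H ir0 Pi0; rewrite e.
Qed.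

Set Implicit Arguments. Unset Strict Implicit.

Lemma mem_eigen (C : numClosedFieldType) n (A : 'M[C]_n) z :
  (z \in eigen_seq A) = eigenvalue A z.
Proof.
rewrite eigenvalue_root_char /eigen_seq.
move: (svalP (closed_field_poly_normal (char_poly A))).
set r := sval _; rewrite (monicP (char_poly_monic A)) scale1r => ->.
by rewrite root_prod_XsubC.
Qed.

Lemma spec_rad_ge0 (C : numClosedFieldType) n (A : 'M[C]_n) : 0 <= spec_rad A.
Proof. by apply: bm_ge0 => i _; rewrite normr_ge0. Qed.

Lemma spec_rad_ge (C : numClosedFieldType) n (A : 'M[C]_n) z :
  eigenvalue A z -> `|z| <= spec_rad A.
Proof.
rewrite -mem_eigen => hz.
by apply: (@bm_ge C C _ xpredT (fun z => `|z|)) => // i _; rewrite normr_ge0.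
Qed.

Lemma spec_rad_le (C : numClosedFieldType) n (A : 'M[C]_n) r :
  0 <= r -> (forall z, eigenvalue A z -> z != 0 -> `|z| <= r) -> spec_rad A <= r.
Proof.
move=> r0 H; apply: bm_le => // z zi _.
have [->|nz] := eqVneq z 0; first by rewrite normr0.
by apply: H nz; rewrite -mem_eigen.
Qed.

Definition TT (C : numClosedFieldType) n N (q : 'I_N -> C) (f g : 'I_N -> 'cV[C]_n) L :=
  synthesis g *m diagD q L *m analysis f.

Definition phi (C : numClosedFieldType) n N (g : 'I_N -> 'cV[C]_n) k (v : 'rV[C]_n) :=
  \sum_a v 0 a * g k a 0.

Lemma TT_row (C : numClosedFieldType) n N (q : 'I_N -> C) (f g : 'I_N -> 'cV[C]_n) L v b :
  (v *m TT q f g L) 0 b = \sum_(k in L) q k * phi g k v * (f k b 0)^*.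
Proof.
rewrite /TT /diagD mul_mx_diag !mxE.
under eq_bigr do rewrite !mxE big_distrr /=.
rewrite exchange_big /= [RHS]big_mkcond /=.
apply: eq_bigr => k _; rewrite /phi.
under eq_bigr do rewrite !mxE.
case: ifP => kL.
  rewrite mulrAC mulr_sumr; apply: eq_bigr => a _; ring.
by apply: big1 => a _; ring.
Qed.

Lemma phi_row (C : numClosedFieldType) n N (f g : 'I_N -> 'cV[C]_n) (L : {set 'I_N}) (w : 'I_N -> C) m :
  phi g m (\row_b \sum_(k in L) w k * (f k b 0)^*) = \sum_(k in L) w k * inner (g m) (f k).
Proof.
rewrite /phi /inner.
under eq_bigr do rewrite mxE mulr_suml.
rewrite exchange_big /=; apply: eq_bigr => k _.
rewrite mulr_sumr; apply: eq_bigr => b _; ring.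
Qed.

Lemma phiZ (C : numClosedFieldType) n N (g : 'I_N -> 'cV[C]_n) k a v :
  phi g k (a *: v) = a * phi g k v.
Proof.
rewrite /phi mulr_sumr; apply: eq_bigr => b _; rewrite mxE; ring.
Qed.

Lemma phi0 (C : numClosedFieldType) n N (g : 'I_N -> 'cV[C]_n) k :
  phi g k 0 = 0.
Proof. by rewrite /phi big1 // => b _; rewrite mxE mul0r. Qed.

Lemma TT_rowE (C : numClosedFieldType) n N (q : 'I_N -> C) (f g : 'I_N -> 'cV[C]_n) L v :
  v *m TT q f g L = \row_b \sum_(k in L) (q k * phi g k v) * (f k b 0)^*.
Proof. by apply/rowP => b; rewrite TT_row mxE. Qed.

Lemma eig_fwd (C : numClosedFieldType) n N (q : 'I_N -> C) (f g : 'I_N -> 'cV[C]_n) (L : {set 'I_N}) lam :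
  eigenvalue (TT q f g L) lam -> lam != 0 ->
  exists u : 'I_N -> C, (exists2 m, m \in L & u m != 0) /\
    forall m, lam * u m = \sum_(k in L) q k * u k * inner (g m) (f k).
Proof.
move=> /eigenvalueP [v hv vn0] ln0.
exists (fun k => phi g k v); split; last first.
  move=> m; rewrite -phiZ -hv TT_rowE phi_row.
  by apply: eq_bigr => k _.
apply/exists_inP; apply: contraT; rewrite negb_exists_in => /forall_inP H0.
have : v *m TT q f g L = 0.
  rewrite TT_rowE; apply/rowP => b; rewrite !mxE big1 // => k kL.
  by move: (H0 k kL); rewrite negbK => /eqP ->; rewrite mulr0 mul0r.
rewrite hv => /eqP; rewrite scaler_eq0 (negbTE ln0) /= => /eqP v0.
by rewrite v0 eqxx in vn0.
Qed.

Lemma eig_bwd (C : numClosedFieldType) n N (q : 'I_N -> C) (f g : 'I_N -> 'cV[C]_n) (L : {set 'I_N}) lam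
  (u : 'I_N -> C) m0 :
  m0 \in L -> u m0 != 0 -> lam != 0 ->
  (forall m, m \in L -> lam * u m = \sum_(k in L) q k * u k * inner (g m) (f k)) ->
  eigenvalue (TT q f g L) lam.
Proof.
move=> m0L um0 ln0 H.
set v := \row_b \sum_(k in L) (q k * u k) * (f k b 0)^*.
have pv : forall m, m \in L -> phi g m v = lam * u m.
  by move=> m mL; rewrite phi_row H.
apply/eigenvalueP; exists v.
  rewrite TT_rowE; apply/rowP => b; rewrite !mxE big_distrr /=.
  apply: eq_bigr => k kL; rewrite pv //; ring.
apply/eqP => v0.
by move: (pv m0 m0L); rewrite v0 phi0 => /esym/eqP; rewrite mulf_eq0 (negbTE ln0) (negbTE um0).
Qed.

Lemma spec_single (C : numClosedFieldType) n N (q : 'I_N -> C) (f g : 'I_N -> 'cV[C]_n) i :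
  0 <= q i * inner (g i) (f i) ->
  spec_rad (TT q f g [set i]) = q i * inner (g i) (f i).
Proof.
set x := q i * _ => x0.
apply/eqP; rewrite eq_le; apply/andP; split.
  apply: spec_rad_le => // z /eig_fwd H /H [u [[m]]]; rewrite inE => /eqP -> ui /(_ i).
  rewrite big_set1 -/x -mulrA (mulrC (u i)) mulrA => /(mulIf ui) ->.
  by rewrite ger0_norm.
have [->|xn0] := eqVneq x 0; first exact: spec_rad_ge0.
rewrite -{1}(ger0_norm x0); apply: spec_rad_ge.
apply: (@eig_bwd _ _ _ q f g [set i] x (fun _ => 1) i); [by rewrite set11 | exact: oner_neq0 | done | ].
by move=> m; rewrite inE => /eqP ->; rewrite big_set1 /x; ring.
Qed.

Definition hh (C : numClosedFieldType) (c x y : C) :=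
  2^-1 * (x + y + sqrtC ((x - y) ^+ 2 + 4%:R * c)).

Lemma two_neq0 (C : numClosedFieldType) : (2%:R : C) != 0.
Proof. by rewrite pnatr_eq0. Qed.

Lemma sqr_real_ge0 (C : numDomainType) (x y : C) : 0 <= x -> 0 <= y -> 0 <= (x - y) ^+ 2.
Proof.
move=> x0 y0; rewrite -real_normK ?exprn_ge0 ?normr_ge0 //.
by rewrite rpredB // ger0_real.
Qed.

Lemma hh_ge0 (C : numClosedFieldType) (c x y : C) : 0 <= c -> 0 <= x -> 0 <= y -> 0 <= hh c x y.
Proof.
move=> c0 x0 y0; rewrite /hh; apply: mulr_ge0; first by rewrite invr_ge0 ler0n.
by rewrite !addr_ge0 // ?sqrtC_ge0 ?addr_ge0 ?sqr_real_ge0 // mulr_ge0 ?ler0n.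
Qed.

Lemma sum_pair (C : numClosedFieldType) N (i j : 'I_N) (F : 'I_N -> C) :
  i != j -> \sum_(k in [set i; j]) F k = F i + F j.
Proof. by move=> ij; rewrite big_setU1 ?big_set1 // inE. Qed.

Lemma hh_roots (C : numClosedFieldType) (c x y lam : C) :
  let S := sqrtC ((x - y) ^+ 2 + 4%:R * c) in
  (lam - hh c x y) * (lam - 2^-1 * (x + y - S)) = (lam - x) * (lam - y) - c.
Proof.
move=> S; rewrite /hh -/S.
have hS : S ^+ 2 = (x - y) ^+ 2 + 4%:R * c by rewrite sqrtCK.
have h2 := two_neq0 C.
have e : (lam - 2^-1 * (x + y + S)) * (lam - 2^-1 * (x + y - S)) =
   (lam - x) * (lam - y) - c + 4%:R^-1 * ((x - y) ^+ 2 + 4%:R * c - S ^+ 2).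
  by field; rewrite ?h2 //; rewrite pnatr_eq0.
by rewrite e hS subrr mulr0 addr0.
Qed.

Lemma spec_pair (C : numClosedFieldType) n N (q : 'I_N -> C) (f g : 'I_N -> 'cV[C]_n) i j c :
  i != j -> 0 < c ->
  0 <= q i * inner (g i) (f i) -> 0 <= q j * inner (g j) (f j) ->
  q i * q j * inner (g j) (f i) * inner (g i) (f j) = c ->
  spec_rad (TT q f g [set i; j]) = hh c (q i * inner (g i) (f i)) (q j * inner (g j) (f j)).
Proof.
set xi := q i * _; set xj := q j * _ => ij c0 xi0 xj0 hc.
set A := q j * inner (g i) (f j); set B := q i * inner (g j) (f i).
have cAB : c = A * B by rewrite -hc /A /B; ring.
have cn0 : c != 0 by rewrite gt_eqF.
set S := sqrtC ((xi - xj) ^+ 2 + 4%:R * c).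
set h := hh c xi xj; set h' := 2^-1 * (xi + xj - S).
have roots := hh_roots c xi xj.
have S0 : 0 <= S by rewrite sqrtC_ge0 addr_ge0 ?sqr_real_ge0 // mulr_ge0 ?ler0n ?ltW.
have Sgt0 : 0 < S.
  rewrite sqrtC_gt0; apply: ltr_wpDl; first exact: sqr_real_ge0.
  by rewrite mulr_gt0 ?ltr0n.
have h0 : 0 <= h by apply: hh_ge0 => //; exact: ltW.
have i2 : 0 <= (2%:R : C)^-1 by rewrite invr_ge0 ler0n.
have hmh' : h - h' = S by rewrite /h /h' /hh -/S; field.
have hph' : h + h' = xi + xj by rewrite /h /h' /hh -/S; field.
apply/eqP; rewrite eq_le; apply/andP; split.
  apply: spec_rad_le => // z /eig_fwd H /H [u [[m mL um] eqs]].
  have ei := eqs i; have ej := eqs j.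
  rewrite sum_pair // -/xi in ei; rewrite sum_pair // -/xj in ej.
  have P0 : (z - xi) * (z - xj) - c = 0.
    have Pi : ((z - xi) * (z - xj) - c) * u i = 0.
      have -> : ((z - xi) * (z - xj) - c) * u i =
        (z - xj) * (z * u i - (q i * u i * inner (g i) (f i) + q j * u j * inner (g i) (f j)))
        + A * (z * u j - (q i * u i * inner (g j) (f i) + q j * u j * inner (g j) (f j))).
        by rewrite cAB /A /B /xi /xj; ring.
      by rewrite ei ej !subrr !mulr0 addr0.
    have Pj : ((z - xi) * (z - xj) - c) * u j = 0.
      have -> : ((z - xi) * (z - xj) - c) * u j =
        (z - xi) * (z * u j - (q i * u i * inner (g j) (f i) + q j * u j * inner (g j) (f j)))
        + B * (z * u i - (q i * u i * inner (g i) (f i) + q j * u j * inner (g i) (f j))).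
        by rewrite cAB /A /B /xi /xj; ring.
      by rewrite ei ej !subrr !mulr0 addr0.
    move: mL; rewrite !inE => /orP [] /eqP em; subst m.
      by move/eqP: Pi; rewrite mulf_eq0 (negbTE um) orbF => /eqP.
    by move/eqP: Pj; rewrite mulf_eq0 (negbTE um) orbF => /eqP.
  move: P0; rewrite -roots -/S -/h -/h' => /eqP; rewrite mulf_eq0 !subr_eq0 => /orP [] /eqP ->.
    by rewrite ger0_norm.
  have h'r : h' \is Num.real.
    by rewrite /h' rpredM ?rpredB ?rpredD ?ger0_real.
  rewrite real_ler_norml //; apply/andP; split.
    by rewrite -subr_ge0 opprK addrC hph' addr_ge0.
  by rewrite -subr_ge0 hmh'.
rewrite -{1}(ger0_norm h0); apply: spec_rad_ge.
have hi : (h - xi) * (h - xj) = c.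
  by apply/eqP; rewrite -subr_eq0 -roots -/S -/h -/h' subrr mul0r.
have An0 : A != 0 by apply: contraNneq cn0; rewrite cAB => ->; rewrite mul0r.
apply: (@eig_bwd _ _ _ q f g [set i; j] h (fun k => if k == i then A else h - xi) i).
- by rewrite !inE eqxx.
- by rewrite eqxx.
- by rewrite gt_eqF // /h /hh -/S mulr_gt0 ?invr_gt0 ?ltr0n // (ltr_pwDr Sgt0) // addr_ge0.
have ji : (j == i) = false by rewrite eq_sym (negbTE ij).
move=> m; rewrite !inE => /orP [] /eqP ->; rewrite sum_pair // eqxx ji.
  rewrite /A /xi; ring.
apply/eqP; rewrite -subr_eq0; apply/eqP.
transitivity ((h - xi) * (h - xj) - c); last by rewrite hi subrr.
rewrite cAB /A /B /xj; ring.
Qed.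

Lemma hh_sym (C : numClosedFieldType) (c x y : C) : hh c x y = hh c y x.
Proof. by rewrite /hh (addrC x) -sqrrN opprB. Qed.

Lemma hh_mono1 (C : numClosedFieldType) (c x x' y : C) :
  0 <= c -> 0 <= x -> x <= x' -> 0 <= y -> hh c x y <= hh c x' y.
Proof.
move=> c0 x0 xx' y0.
have x'0 : 0 <= x' := le_trans x0 xx'.
have c4 : 0 <= 4%:R * c by rewrite mulr_ge0 ?ler0n.
set S := sqrtC ((x - y) ^+ 2 + 4%:R * c).
set S' := sqrtC ((x' - y) ^+ 2 + 4%:R * c).
have S'0 : 0 <= S' by rewrite sqrtC_ge0 addr_ge0 ?sqr_real_ge0.
have d0 : 0 <= x' - x by rewrite subr_ge0.
have nS' : `|x' - y| <= S'.
  rewrite -(sqrCK (normr_ge0 (x' - y))) ler_sqrtC ?nnegrE ?exprn_ge0 ?normr_ge0 ?addr_ge0 ?sqr_real_ge0 //.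
  by rewrite real_normK ?rpredB ?ger0_real // lerDl.
have nS'' : 0 <= S' + (x' - y).
  rewrite -[x' - y]opprK subr_ge0; apply: le_trans nS'.
  by rewrite -normrN real_ler_norm // rpredN rpredB ?ger0_real.
have key : S <= S' + (x' - x).
  have hA : 0 <= (x - y) ^+ 2 + 4%:R * c by rewrite addr_ge0 ?sqr_real_ge0.
  have hB : 0 <= (S' + (x' - x)) ^+ 2 by rewrite exprn_ge0 // addr_ge0.
  rewrite -(sqrCK (addr_ge0 S'0 d0)) ler_sqrtC ?nnegrE //.
  rewrite -subr_ge0.
  have -> : (S' + (x' - x)) ^+ 2 - ((x - y) ^+ 2 + 4%:R * c) =
     2%:R * (x' - x) * (S' + (x' - y)) + (S' ^+ 2 - ((x' - y) ^+ 2 + 4%:R * c)) by ring.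
  by rewrite sqrtCK subrr addr0 !mulr_ge0 ?ler0n.
have i2 : 0 < (2%:R : C)^-1 by rewrite invr_gt0 ltr0n.
rewrite /hh -/S -/S' (ler_pM2l i2) -subr_ge0.
have -> : x' + y + S' - (x + y + S) = S' + (x' - x) - S by ring.
by rewrite subr_ge0.
Qed.

Lemma hh_mono (C : numClosedFieldType) (c x x' y y' : C) :
  0 <= c -> 0 <= x -> x <= x' -> 0 <= y -> y <= y' -> hh c x y <= hh c x' y'.
Proof.
move=> c0 x0 xx' y0 yy'.
apply: le_trans (hh_mono1 c0 x0 xx' y0) _.
rewrite hh_sym [hh c x' y']hh_sym; apply: hh_mono1 => //.
exact: le_trans x0 xx'.
Qed.

Lemma RmpE (C : numClosedFieldType) n N (p : 'I_N -> C) m (f g : 'I_N -> 'cV[C]_n) :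
  Rmp p m f g = \big[Num.max/0]_(L : {set 'I_N} | #|L| == m) spec_rad (TT (weight n p) f g L).
Proof. by []. Qed.

Lemma Rm_ge (C : numClosedFieldType) n N (q : 'I_N -> C) (f g : 'I_N -> 'cV[C]_n) m (L : {set 'I_N}) :
  #|L| == m ->
  spec_rad (TT q f g L) <= \big[Num.max/0]_(L : {set 'I_N} | #|L| == m) spec_rad (TT q f g L).
Proof.
move=> hL; apply: (@bm_ge C _ _ (fun L : {set 'I_N} => #|L| == m) (fun L => spec_rad (TT q f g L))) => //.
  by move=> *; exact: spec_rad_ge0.
exact: mem_index_enum.
Qed.

Lemma Rm_le (C : numClosedFieldType) n N (q : 'I_N -> C) (f g : 'I_N -> 'cV[C]_n) m B :
  0 <= B -> (forall L : {set 'I_N}, #|L| == m -> spec_rad (TT q f g L) <= B) ->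
  \big[Num.max/0]_(L : {set 'I_N} | #|L| == m) spec_rad (TT q f g L) <= B.
Proof. by move=> B0 H; apply: bm_le => // L _; apply: H. Qed.

Theorem theorem3p2 (C : numClosedFieldType) (n N : nat)
  (p : 'I_N -> C) (f g : 'I_N -> 'cV[C]_n) (c : C) :
  (0 < n)%N -> (maxn n 2 <= N)%N ->
  is_frame f ->
  is_prob_seq p ->
  (forall i, \sum_j p j - p i != 0) ->
  is_dual f g ->
  (forall i, 0 <= inner (g i) (f i)) ->
  0 < c ->
  (forall i j, i != j ->
     weight n p i * weight n p j * inner (g j) (f i) * inner (g i) (f j) = c) ->
  let q := weight n p in
  let R1 := Rmp p 1 f g in
  let R2 := Rmp p 2 f g in
  let zeta := [set i | q i * inner (g i) (f i) == R1] in
  let M := \big[Num.max/0]_(i | i \notin zeta) (q i * inner (g i) (f i)) in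
  (#|zeta| = 1%N ->
     R2 = 2^-1 * (R1 + M + sqrtC ((R1 - M) ^+ 2 + 4%:R * c))) /\
  ((1 < #|zeta|)%N -> R2 = R1 + sqrtC c).
Proof.
move=> n0 hN _ [hp1 hp2] _ _ ha c0 hc q R1 R2 zeta M.
have q0 : forall i, 0 <= q i.
  move=> i; rewrite /q /weight hp2; apply: mulr_ge0; apply: divr_ge0 => //.
  - by case/andP: (hp1 i) => _; rewrite subr_ge0.
have x0 : forall i, 0 <= q i * inner (g i) (f i) by move=> i; rewrite mulr_ge0.
set x := fun i => q i * inner (g i) (f i).
have c0' : 0 <= c := ltW c0.
have R1ge : forall i, x i <= R1.
  move=> i; have h1 : #|[set i]| == 1%N by rewrite cards1.
  rewrite /R1 RmpE -/q; apply: le_trans (Rm_ge _ _ _ h1).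
  by rewrite spec_single.
have R10 : 0 <= R1 by rewrite /R1 RmpE; apply: bm_ge0 => *; exact: spec_rad_ge0.
have pairE : forall i j, i != j -> spec_rad (TT q f g [set i; j]) = hh c (x i) (x j).
  by move=> i j ij; rewrite (spec_pair (c:=c)) //; apply: hc.
have R2ge : forall i j, i != j -> hh c (x i) (x j) <= R2.
  move=> i j ij; have h2 : #|[set i; j]| == 2%N by rewrite cards2 ij.
  by rewrite -pairE // /R2 RmpE -/q; apply: (Rm_ge _ _ _ h2).
have R2le : forall B, 0 <= B -> (forall i j, i != j -> hh c (x i) (x j) <= B) -> R2 <= B.
  move=> B B0 H; rewrite /R2 RmpE -/q; apply: Rm_le => // L /cards2P [i [j [ij ->]]].
  by rewrite pairE // H.
split.
  move/eqP/cards1P => [i0 zi0].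
  have : i0 \in zeta by rewrite zi0 set11.
  rewrite inE => /eqP xi0.
  have N2 : (1 < #|'I_N|)%N by rewrite card_ord; apply: leq_trans hN; rewrite leq_maxr.
  have [j0 nj0] : exists j0, j0 \notin zeta.
    case/card_gt1P: N2 => a [b [_ _ ab]].
    case: (eqVneq a i0) => [ai0|ai0]; last by exists a; rewrite zi0 inE.
    by exists b; rewrite zi0 inE -ai0 eq_sym.
  have Pnn : forall i, i \notin zeta -> 0 <= x i by move=> i _; apply: x0.
  have [j1 [_ nj1 Mx]] := @bm_attained C _ (index_enum 'I_N) (fun i => i \notin zeta) x Pnn (ex_intro2 _ _ j0 (mem_index_enum j0) nj0).
  have Mge : forall i, i \notin zeta -> x i <= M.
    by move=> i ni; exact: (@bm_ge C _ (index_enum 'I_N) (fun i => i \notin zeta) x i Pnn (mem_index_enum i) ni).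
  have M0 : 0 <= M by rewrite /M Mx; apply: x0.
  have ne : forall i, i != i0 -> i \notin zeta by move=> i; rewrite zi0 inE.
  change (R2 = hh c R1 M).
  apply/eqP; rewrite eq_le; apply/andP; split.
    apply: R2le; first exact: hh_ge0.
    move=> i j ij; case: (eqVneq i i0) => [ei|ii0].
      subst i; apply: hh_mono; [done | exact: x0 | exact: R1ge | exact: x0 | ].
      by apply: Mge; apply: ne; rewrite eq_sym.
    rewrite hh_sym; apply: hh_mono; [done | exact: x0 | exact: R1ge | exact: x0 | ].
    by apply: Mge; apply: ne.
  rewrite -xi0 /M Mx; apply: R2ge.
  by apply: contraNneq nj1 => <-; rewrite zi0 set11.
case/card_gt1P => i0 [i1 [zi0 zi1 i01]].
move: zi0 zi1; rewrite !inE => /eqP xi0 /eqP xi1.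
have -> : R2 = hh c R1 R1.
  apply/eqP; rewrite eq_le; apply/andP; split.
    apply: R2le; first exact: hh_ge0.
    by move=> i j ij; apply: hh_mono; [done | exact: x0 | exact: R1ge | exact: x0 | exact: R1ge].
  by rewrite -{1}xi0 -xi1; apply: R2ge.
have s4 : sqrtC (4%:R : C) = 2%:R.
  by rewrite -[4%:R]/((2 ^ 2)%N%:R : C) natrX sqrCK ?ler0n.
rewrite /hh subrr expr0n /= add0r sqrtCM ?nnegrE ?ler0n // s4.
by field.
Qed.
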